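(* $u_2u_1u_2\subset U'$.
   Context: Let $B_3=\langle s_1,s_2\mid s_1s_2s_1=s_2s_1s_2\rangle$, $R_5=\mathbb{Z}[a,b,c,d,e,e^{-1}]$, and let $H_5$ be the quotient of the group algebra $R_5B_3$ by the relations $s_i^5=as_i^4+bs_i^3+cs_i^2+ds_i+e$ for $i=1,2$; identify $s_i$ with their images. For $i=1,2$ let $u_i$ be the $R_5$-subalgebra of $H_5$ generated by $s_i$. Set $\omega=s_2s_1^2s_2$. For $R_5$-submodules (or elements) $X_1,\dots,X_n$, $X_1\cdots X_n$ denotes the $R_5$-submodule spanned by products $x_1\cdots x_n$, $x_j\in X_j$; sums are sums of submodules. Define $U'=u_1u_2u_1+u_1\omega+u_1\omega^{-1}+u_1s_2^{-1}s_1^2s_2^{-1}u_1+u_1s_2s_1^{-2}s_2u_1+u_1s_2^2s_1^2s_2^2u_1+u_1s_2^{-2}s_1^{-2}s_2^{-2}u_1+u_1s_2s_1^{-2}s_2^2u_1+u_1s_2^{-1}s_1^2s_2^{-2}u_1+u_1s_2^{-1}s_1s_2^{-1}u_1+u_1s_2s_1^{-1}s_2u_1+u_1s_2^{-2}s_1^{-2}s_2^2u_1+u_1s_2^2s_1^2s_2^{-2}u_1+u_1s_2^2s_1^{-2}s_2^2u_1+u_1s_2^{-2}s_1^2s_2^{-2}u_1+u_1s_2^{-2}s_1s_2^{-1}u_1+u_1s_2^{-1}s_1s_2^{-2}u_1$. *)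

(* Defs.v *)
From mathcomp Require Import all_boot all_order all_algebra.
Set Implicit Arguments. Unset Strict Implicit. Unset Printing Implicit Defensive.
Import GRing.Theory.
Local Open Scope ring_scope.

(* R-submodules of an R-algebra A are represented as predicates A -> Prop. *)
Section Submodules.
Variables (R : comUnitRingType) (A : algType R).

Definition spanM (P : A -> Prop) : A -> Prop :=
  fun x => exists n (c : 'I_n -> R) (v : 'I_n -> A),
    (forall i, P (v i)) /\ x = \sum_(i < n) c i *: v i.

Definition mulM (X Y : A -> Prop) : A -> Prop :=
  spanM (fun z => exists x y, [/\ X x, Y y & z = x * y]).

Definition addM (X Y : A -> Prop) : A -> Prop :=
  fun z => exists x y, [/\ X x, Y y & z = x + y].

Definition eltM (g : A) : A -> Prop := fun x => x = g.

Definition genM (s : A) : A -> Prop :=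
  fun x => exists n (c : 'I_n -> R), x = \sum_(k < n) c k *: s ^+ k.

Definition subM (X Y : A -> Prop) : Prop := forall x, X x -> Y x.

Definition sandM (u : A -> Prop) (g : A) : A -> Prop := mulM (mulM u (eltM g)) u.

(* The module U' of the paper; t1, t2 are the inverses of s1, s2. *)
Definition Uprime (s1 s2 t1 t2 : A) : A -> Prop :=
  let u1 := genM s1 in let u2 := genM s2 in
  let omega := s2 * s1 ^+ 2 * s2 in
  let omegai := t2 * t1 ^+ 2 * t2 in
  foldr addM (mulM (mulM u1 u2) u1)
  [:: mulM u1 (eltM omega);
      mulM u1 (eltM omegai);
      sandM u1 (t2 * s1 ^+ 2 * t2);
      sandM u1 (s2 * t1 ^+ 2 * s2);
      sandM u1 (s2 ^+ 2 * s1 ^+ 2 * s2 ^+ 2);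
      sandM u1 (t2 ^+ 2 * t1 ^+ 2 * t2 ^+ 2);
      sandM u1 (s2 * t1 ^+ 2 * s2 ^+ 2);
      sandM u1 (t2 * s1 ^+ 2 * t2 ^+ 2);
      sandM u1 (t2 * s1 * t2);
      sandM u1 (s2 * t1 * s2);
      sandM u1 (t2 ^+ 2 * t1 ^+ 2 * s2 ^+ 2);
      sandM u1 (s2 ^+ 2 * s1 ^+ 2 * t2 ^+ 2);
      sandM u1 (s2 ^+ 2 * t1 ^+ 2 * s2 ^+ 2);
      sandM u1 (t2 ^+ 2 * s1 ^+ 2 * t2 ^+ 2);
      sandM u1 (t2 ^+ 2 * s1 * t2);
      sandM u1 (t2 * s1 * t2 ^+ 2)].

End Submodules.

(* Main.v *)
Require Import Defs.
From mathcomp Require Import all_boot all_order all_algebra.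
Set Implicit Arguments. Unset Strict Implicit. Unset Printing Implicit Defensive.
Import GRing.Theory Num.Theory.
Local Open Scope ring_scope.

Definition word := seq (bool * int).

Definition consn (x : bool * int) (w : word) : word :=
  if x.2 == 0 then w else
  match w with
  | y :: w' => if x.1 == y.1 then (if x.2 + y.2 == 0 then w' else (x.1, x.2 + y.2) :: w')
               else x :: w
  | [::] => [:: x]
  end.
Definition normw (w : word) : word := foldr consn [::] w.

Definition rulew (r : nat) (k : int) : word * word :=
  match r with
  | 0 => ([:: (true,k);(false,1);(true,1)], [:: (false,1);(true,1);(false,k)])
  | 1 => ([:: (true,1);(false,1);(true,k)], [:: (false,k);(true,1);(false,1)])
  | 2 => ([:: (true,k);(false,-1);(true,-1)], [:: (false,-1);(true,-1);(false,k)])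
  | 3 => ([:: (true,-1);(false,-1);(true,k)], [:: (false,k);(true,-1);(false,-1)])
  | 4 => ([:: (true,1);(false,k);(true,-1)], [:: (false,-1);(true,k);(false,1)])
  | _ => ([:: (true,-1);(false,k);(true,1)], [:: (false,1);(true,k);(false,-1)])
  end.

Inductive step := WSplit of nat & int | WRule of nat & nat & bool & int | WNorm.

Definition apply_step (st : step) (w : word) : option word :=
  match st with
  | WSplit i k1 => match drop i w with
      | (l, e) :: w' => Some (take i w ++ (l, k1) :: (l, e - k1) :: w')
      | [::] => None end
  | WRule i r dr k =>
      let p := if dr then (rulew r k).1 else (rulew r k).2 in
      let q := if dr then (rulew r k).2 else (rulew r k).1 in
      if take 3 (drop i w) == p then Some (take i w ++ q ++ drop 3 (drop i w)) else None
  | WNorm => Some (normw w)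
  end.

Fixpoint run (ss : seq step) (w : word) : option word :=
  match ss with
  | [::] => Some w
  | st :: ss' => if apply_step st w is Some w' then run ss' w' else None
  end.

Definition checkw (ss : seq step) (w1 w2 : word) : bool :=
  if run ss w1 is Some w' then normw w' == normw w2 else false.

Section Pw.
Variables (R : comUnitRingType) (A : algType R).

Definition pw (s t : A) (k : int) : A :=
  match k with Posz n => s ^+ n | Negz n => t ^+ n.+1 end.

Lemma pw_conj (X u u' v v' : A) : X * u = v * X -> X * u' = v' * X ->
  forall k, X * pw u u' k = pw v v' k * X.
Proof.
move=> h h' k.
have gen: forall (x y : A), X * x = y * X -> forall n, X * x ^+ n = y ^+ n * X.
  move=> x y hxy; elim=> [|n IH]; first by rewrite !expr0 mul1r mulr1.
  by rewrite !exprSr mulrA IH -mulrA hxy mulrA.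
by case: k => n /=; apply: gen.
Qed.

Variables (s t : A).
Hypotheses (st : s * t = 1) (ts : t * s = 1).

Lemma pw0 : pw s t 0 = 1. Proof. by []. Qed.

Lemma pwS k : pw s t (k + 1) = pw s t k * s.
Proof.
case: k => [n|n].
  by rewrite -PoszD addn1 /= exprSr.
case: n => [|m]; first by rewrite /= expr1 ts.
have -> : Negz m.+1 + 1 = Negz m.
  by rewrite !NegzE -[(m.+2)%N]addn1 PoszD opprD addrNK.
by rewrite /= [in RHS]exprSr -mulrA ts mulr1.
Qed.

Lemma pwP k : pw s t (k - 1) = pw s t k * t.
Proof.
by rewrite -{2}(subrK 1 k) pwS -mulrA st mulr1.
Qed.

Lemma pwD m n : pw s t (m + n) = pw s t m * pw s t n.
Proof.
case: n => [n|n].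
  elim: n => [|n IH]; first by rewrite addr0 mulr1.
  by rewrite -addn1 PoszD addrA !pwS IH mulrA.
elim: n => [|n IH].
  by rewrite /= expr1 -pwP.
have -> : Negz n.+1 = Negz n - 1 by rewrite !NegzE -[(n.+2)%N]addn1 PoszD opprD.
by rewrite addrA !pwP IH mulrA.
Qed.

End Pw.

Section Words.
Variables (R : comUnitRingType) (A : algType R) (s1 s2 t1 t2 : A).
Hypotheses (st1 : s1 * t1 = 1) (ts1 : t1 * s1 = 1) (st2 : s2 * t2 = 1) (ts2 : t2 * s2 = 1)
  (br : s1 * s2 * s1 = s2 * s1 * s2).

Definition lw (x : bool * int) : A := if x.1 then pw s2 t2 x.2 else pw s1 t1 x.2.
Definition evalw (w : word) : A := foldr (fun x acc => lw x * acc) 1 w.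

Lemma evalw_cat u v : evalw (u ++ v) = evalw u * evalw v.
Proof. by elim: u => [|x u IH] /=; rewrite ?mul1r // IH mulrA. Qed.

Lemma lwD l m n : lw (l, m + n) = lw (l, m) * lw (l, n).
Proof. by rewrite /lw /=; case: l; rewrite pwD. Qed.

Lemma lw0 l : lw (l, 0) = 1. Proof. by rewrite /lw; case: l. Qed.

Lemma consn_ok x w : evalw (consn x w) = lw x * evalw w.
Proof.
rewrite /consn; case: x => l k /=.
case: eqP => [->|_]; first by rewrite lw0 mul1r.
case: w => [|[l' k'] w'] //=.
case: eqP => [<-|_] //.
rewrite mulrA -lwD.
by case: eqP => [->|_] //; rewrite lw0 mul1r.
Qed.

Lemma normw_ok w : evalw (normw w) = evalw w.
Proof. by elim: w => [|x w IH] //=; rewrite consn_ok IH. Qed.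

Let X := s1 * s2. Let X' := t2 * t1. Let Y := s2 * s1. Let Y' := t1 * t2.
Lemma XX' : X * X' = 1. Proof. by rewrite /X /X' mulrA -(mulrA s1) st2 mulr1 st1. Qed.
Lemma X'X : X' * X = 1. Proof. by rewrite /X /X' mulrA -(mulrA t2) ts1 mulr1 ts2. Qed.
Lemma YY' : Y * Y' = 1. Proof. by rewrite /Y /Y' mulrA -(mulrA s2) st1 mulr1 st2. Qed.
Lemma Y'Y : Y' * Y = 1. Proof. by rewrite /Y /Y' mulrA -(mulrA t1) ts2 mulr1 ts1. Qed.

Lemma conj_inv (Z Z' u u' v v' : A) : Z * Z' = 1 -> Z' * Z = 1 ->
  u * u' = 1 -> v' * v = 1 ->
  Z * u = v * Z -> Z * u' = v' * Z.
Proof.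
move=> h1 h2 h3 h4 h.
have e: Z = v' * Z * u by rewrite -mulrA h mulrA h4 mul1r.
by rewrite {1}e -mulrA h3 mulr1.
Qed.

Lemma conj_swap (Z Z' u v : A) : Z * Z' = 1 -> Z' * Z = 1 ->
  Z * u = v * Z -> Z' * v = u * Z'.
Proof.
move=> h1 h2 h.
by rewrite -[Z' * v]mulr1 -h1 mulrA -(mulrA Z') -h mulrA h2 mul1r.
Qed.

Lemma Xs1 : X * s1 = s2 * X. Proof. by rewrite /X br mulrA. Qed.
Lemma Xt1 : X * t1 = t2 * X.
Proof. by apply: (conj_inv XX' X'X st1 ts2 Xs1). Qed.
Lemma Ys2 : Y * s2 = s1 * Y. Proof. by rewrite /Y -br !mulrA. Qed.
Lemma Yt2 : Y * t2 = t1 * Y.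
Proof. by apply: (conj_inv YY' Y'Y st2 ts1 Ys2). Qed.
Lemma Y's1 : Y' * s1 = s2 * Y'. Proof. exact: (conj_swap YY' Y'Y Ys2). Qed.
Lemma Y't1 : Y' * t1 = t2 * Y'. Proof. exact: (conj_swap YY' Y'Y Yt2). Qed.
Lemma X's2 : X' * s2 = s1 * X'. Proof. exact: (conj_swap XX' X'X Xs1). Qed.
Lemma X't2 : X' * t2 = t1 * X'. Proof. exact: (conj_swap XX' X'X Xt1). Qed.

Lemma ev3 x y z : evalw [:: x; y; z] = lw x * lw y * lw z.
Proof. by rewrite /= mulr1 mulrA. Qed.

Lemma lw1a : lw (false, 1) = s1. Proof. by rewrite /lw /= expr1. Qed.
Lemma lw1b : lw (true, 1) = s2. Proof. by rewrite /lw /= expr1. Qed.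
Lemma lwm1a : lw (false, -1) = t1. Proof. by rewrite /lw /= expr1. Qed.
Lemma lwm1b : lw (true, -1) = t2. Proof. by rewrite /lw /= expr1. Qed.

Lemma rule_ok r k : evalw (rulew r k).1 = evalw (rulew r k).2.
Proof.
have G1 : pw s2 t2 k * s1 * s2 = s1 * s2 * pw s1 t1 k.
  by rewrite -mulrA -/X -(pw_conj Xs1 Xt1).
have G2 : s2 * s1 * pw s2 t2 k = pw s1 t1 k * s2 * s1.
  by rewrite -/Y (pw_conj Ys2 Yt2) mulrA.
case: r => [|[|[|[|[|r]]]]] /=; rewrite !mulr1 ?lw1a ?lw1b ?lwm1a ?lwm1b /lw /=;

rewrite !mulrA.
- exact: G1.
- exact: G2.
- by have := pw_conj Y's1 Y't1 k; rewrite /Y' !mulrA => ->.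
- by have := pw_conj X's2 X't2 k; rewrite /X' !mulrA => ->.
- have := congr1 (fun z => t1 * z * t2) G1 => /=.
  rewrite !mulrA ts1 mul1r -(mulrA _ s2 t2) st2 mulr1 => ->.
  by [].
- have := congr1 (fun z => t2 * z * t1) G2 => /=.
  rewrite !mulrA ts2 mul1r -(mulrA _ s1 t1) st1 mulr1 => <-.
  by [].
Qed.



Lemma step_ok st w w' : apply_step st w = Some w' -> evalw w = evalw w'.
Proof.
case: st => [i k1|i r dr k|] /=.
- case E: (drop i w) => [|[l e] w1] // [<-].
  rewrite -{1}(cat_take_drop i w) E !evalw_cat /=.
  by rewrite (mulrA (lw (l, k1))) -lwD addrC subrK.
- case: ifP => // /eqP E [<-].
  rewrite -{1}(cat_take_drop i w) -{1}(cat_take_drop 3 (drop i w)) E !evalw_cat.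
  by move: E; case: dr => _; rewrite ?rule_ok.
- by move=> [<-]; rewrite normw_ok.
Qed.

Lemma run_ok ss w w' : run ss w = Some w' -> evalw w = evalw w'.
Proof.
elim: ss w => [|st ss IH] w /=; first by move=> [->].
case E: (apply_step st w) => [w1|] // /IH <-.
exact: step_ok E.
Qed.

Lemma checkw_ok ss w1 w2 : checkw ss w1 w2 -> evalw w1 = evalw w2.
Proof.
rewrite /checkw; case E: (run ss w1) => [w'|] // /eqP h.
by rewrite (run_ok E) -normw_ok h normw_ok.
Qed.

End Words.

Lemma int_window (m : int) : -2 <= m <= 2 -> m = -2 \/ m = -1 \/ m = 0 \/ m = 1 \/ m = 2.
Proof.
case: m => [[|[|[|n]]]|[|[|n]]] //= _; tauto.
Qed.

Section Gen.
Variables (R : comUnitRingType) (A : algType R).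

Definition subm (S : A -> Prop) :=
  [/\ S 0, forall x y, S x -> S y -> S (x + y) & forall r x, S x -> S (r *: x)].

Lemma subm_sum (S : A -> Prop) n (c : 'I_n -> R) (v : 'I_n -> A) :
  subm S -> (forall i, S (v i)) -> S (\sum_(i < n) c i *: v i).
Proof.
move=> [S0 SD SZ] Sv; elim/big_ind: _ => //.
by move=> i _; apply: SZ.
Qed.

Lemma subm_span (P : A -> Prop) : subm (spanM P).
Proof.
split.
- exists 0%N, (fun _ => 0), (fun _ => 0); split; first by case.
  by rewrite big_ord0.
- move=> x y [n1 [c1 [v1 [P1 ->]]]] [n2 [c2 [v2 [P2 ->]]]].
  exists (n1 + n2)%N, (fun i => match split i with inl j => c1 j | inr j => c2 j end),
    (fun i => match split i with inl j => v1 j | inr j => v2 j end); split.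
    by move=> i; case: (split i).
  rewrite big_split_ord /=; congr (_ + _); apply: eq_bigr => i _.
    by rewrite (unsplitK (inl _ i)).
  by rewrite (unsplitK (inr _ i)).
- move=> r x [n [c [v [Pv ->]]]].
  exists n, (fun i => r * c i), v; split => //.
  by rewrite scaler_sumr; apply: eq_bigr => i _; rewrite scalerA.
Qed.

Lemma span_lin (P S : A -> Prop) (f : A -> A) x :
  subm S -> (forall x y, f (x + y) = f x + f y) -> (forall r x, f (r *: x) = r *: f x) ->
  f 0 = 0 -> (forall v, P v -> S (f v)) -> spanM P x -> S (f x).
Proof.
move=> hS fD fZ f0 hP [n [c [v [Pv ->]]]].
rewrite (big_morph f fD f0).
under eq_bigr do rewrite fZ.
by apply: subm_sum => // i; apply: hP.
Qed.

Lemma gen_lin (s : A) (S : A -> Prop) (f : A -> A) x :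
  subm S -> (forall x y, f (x + y) = f x + f y) -> (forall r x, f (r *: x) = r *: f x) ->
  f 0 = 0 -> (forall k, S (f (s ^+ k))) -> genM s x -> S (f x).
Proof.
move=> hS fD fZ f0 hP [n [c ->]].
rewrite (big_morph f fD f0).
under eq_bigr do rewrite fZ.
by apply: subm_sum.
Qed.

Lemma mulM_in (X Y : A -> Prop) (x y : A) : X x -> Y y -> mulM X Y (x * y).
Proof.
move=> hx hy; exists 1%N, (fun _ => 1), (fun _ => x * y); split.
  by move=> _; exists x, y.
by rewrite big_ord1 scale1r.
Qed.

Lemma genM_pow (s : A) k : genM s (s ^+ k).
Proof.
exists k.+1, (fun i => ((i : nat) == k)%:R).
rewrite big_ord_recr /= eqxx scale1r big1 ?add0r // => i _.
by rewrite ltn_eqF // scale0r.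
Qed.

Lemma subm_genM (s : A) : subm (genM s).
Proof.
have nat_form : forall x, genM s x <->
    exists n (f : nat -> R), x = \sum_(k < n) f k *: s ^+ k.
  move=> x; split.
    move=> [n [c ->]].
    exists n, (fun k => if insub k is Some i then c i else 0).
    by apply: eq_bigr => i _; rewrite valK.
  by move=> [n [f ->]]; exists n, (fun i => f i).
split.
- by exists 0%N, (fun _ => 0); rewrite big_ord0.
- move=> x y /nat_form [n1 [f1 ->]] /nat_form [n2 [f2 ->]]; apply/nat_form.
  exists (maxn n1 n2), (fun k => (if (k < n1)%N then f1 k else 0) + (if (k < n2)%N then f2 k else 0)).
  rewrite (big_ord_widen _ (fun k => f1 k *: s ^+ k) (leq_maxl n1 n2)).
  rewrite (big_ord_widen _ (fun k => f2 k *: s ^+ k) (leq_maxr n1 n2)).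
  rewrite big_mkcond [X in _ + X]big_mkcond -big_split /=.
  apply: eq_bigr => i _; rewrite scalerDl.
  by case: ifP => _; case: ifP => _ //; rewrite !scale0r.
- move=> r x [n [c ->]]; exists n, (fun i => r * c i).
  by rewrite scaler_sumr; apply: eq_bigr => i _; rewrite scalerA.
Qed.

Lemma span_in (P S : A -> Prop) (x : A) : subm S -> (forall v, P v -> S v) -> spanM P x -> S x.
Proof. by move=> hS hP; apply: (span_lin (f := id)). Qed.

Lemma sD (S : A -> Prop) x y : subm S -> S x -> S y -> S (x + y).
Proof. by case=> _ h _; apply: h. Qed.
Lemma sZ (S : A -> Prop) r x : subm S -> S x -> S (r *: x).
Proof. by case=> _ _ h; apply: h. Qed.
Lemma s0 (S : A -> Prop) : subm S -> S 0.
Proof. by case. Qed.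
Lemma sB (S : A -> Prop) x y : subm S -> S x -> S y -> S (x - y).
Proof. by move=> hS hx hy; apply: sD => //; rewrite -scaleN1r; apply: sZ. Qed.

Fixpoint inP (C : A -> Prop) (Cs : seq (A -> Prop)) : Prop :=
  if Cs is C' :: Cs' then C' = C \/ inP C Cs' else False.

Lemma addM_subm (X Y : A -> Prop) : subm X -> subm Y -> subm (addM X Y).
Proof.
move=> hX hY; split.
- by exists 0, 0; rewrite addr0; split => //; apply: s0.
- move=> x y [x1 [y1 [h1 h2 ->]]] [x2 [y2 [h3 h4 ->]]].
  exists (x1 + x2), (y1 + y2); split; first by apply: sD.
    by apply: sD.
  by rewrite addrACA.
- move=> r x [x1 [y1 [h1 h2 ->]]]; exists (r *: x1), (r *: y1); split.
  + exact: sZ.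
  + exact: sZ.
  + by rewrite scalerDr.
Qed.

Lemma foldr_subm (B : A -> Prop) Cs : subm B -> (forall C, inP C Cs -> subm C) ->
  subm (foldr (@addM _ A) B Cs).
Proof.
move=> hB; elim: Cs => [|C Cs IH] hC //=.
apply: addM_subm; first by apply: hC; left.
by apply: IH => C' h; apply: hC; right.
Qed.

Lemma foldr_clos (f : A -> A) (B : A -> Prop) Cs :
  (forall x y, f (x + y) = f x + f y) -> (forall x, B x -> B (f x)) ->
  (forall C, inP C Cs -> forall x, C x -> C (f x)) ->
  forall x, foldr (@addM _ A) B Cs x -> foldr (@addM _ A) B Cs (f x).
Proof.
move=> fD hB; elim: Cs => [|C Cs IH] hC x //=; first exact: hB.
move=> [x1 [y1 [h1 h2 ->]]]; exists (f x1), (f y1); split.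
- by apply: hC => //; left.
- by apply: IH => // C' h; apply: hC; right.
- by rewrite fD.
Qed.

Lemma foldr_in (B : A -> Prop) Cs (C : A -> Prop) x :
  subm B -> (forall C', inP C' Cs -> subm C') ->
  (C = B \/ inP C Cs) -> C x -> foldr (@addM _ A) B Cs x.
Proof.
move=> hB; elim: Cs => [|C' Cs IH] hC hin hx /=.
  by case: hin => [eq|] //; subst.
case: hin => [eq|[eq|hin]]; subst.
- exists 0, x; split; first by apply: s0; apply: hC; left.
    by apply: IH => //; [move=> C'' h; apply: hC; right | left].
  by rewrite add0r.
- exists x, 0; split => //; last by rewrite addr0.
  by apply: s0; apply: foldr_subm => // C'' h; apply: hC; right.
- exists 0, x; split; first by apply: s0; apply: hC; left.
    by apply: IH => //; [move=> C'' h; apply: hC; right | right].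
  by rewrite add0r.
Qed.

End Gen.

Section Quint.
Variables (R : comUnitRingType) (A : algType R) (a b c d e : R) (s t : A).
Hypotheses (eU : e \is a GRing.unit) (st : s * t = 1) (ts : t * s = 1)
  (q : s ^+ 5 = a *: s ^+ 4 + b *: s ^+ 3 + c *: s ^+ 2 + d *: s + e%:A).

Local Notation p := (pw s t).

Lemma qshift j : p (5 + j) = a *: p (4 + j) + b *: p (3 + j) + c *: p (2 + j) + d *: p (1 + j) + e *: p j.
Proof.
have q' : p 5 = a *: p 4 + b *: p 3 + c *: p 2 + d *: p 1 + e *: p 0 := q.
rewrite !((pwD st ts) _ j) q' !mulrDl -!scalerAl.
by rewrite /= expr0 mul1r.
Qed.

Lemma e3 : p 3 = a *: p 2 + b *: p 1 + c *: p 0 + d *: p (-1) + e *: p (-2).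
Proof. exact: (qshift (-2)). Qed.

Lemma em3 : e *: p (-3) = p 2 - (a *: p 1 + b *: p 0 + c *: p (-1) + d *: p (-2)).
Proof.
have h : p 2 = a *: p 1 + b *: p 0 + c *: p (-1) + d *: p (-2) + e *: p (-3) := qshift (-3).
by rewrite h [RHS]addrC addKr.
Qed.

Lemma em1 : e *: p (-1) = p 4 - (a *: p 3 + b *: p 2 + c *: p 1 + d *: p 0).
Proof.
have h : p 4 = a *: p 3 + b *: p 2 + c *: p 1 + d *: p 0 + e *: p (-1) := qshift (-1).
by rewrite h [RHS]addrC addKr.
Qed.

Lemma unscale (x : A) : x = e^-1 *: (e *: x).
Proof. by rewrite scalerA mulVr // scale1r. Qed.

Lemma subm_sub (S : A -> Prop) (x y : A) : subm S -> S x -> S y -> S (x - y).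
Proof. by move=> [_ SD SZ] hx hy; apply: SD => //; rewrite -scaleN1r; apply: SZ. Qed.

Lemma t_gen : genM s t.
Proof.
have G := subm_genM s.
have ->: t = p (-1) by rewrite /= expr1.
rewrite (unscale (p (-1))) em1; apply: sZ => //.
apply: sB => //; first exact: genM_pow.
by repeat apply: sD => //; apply: sZ => //; apply: genM_pow.
Qed.

Lemma gen_mull m x : (m = s \/ m = t) -> genM s x -> genM s (m * x).
Proof.
move=> hm hx.
apply: (gen_lin (f := fun y => m * y)) hx => //.
- exact: subm_genM.
- by move=> ??; rewrite mulrDr.
- by move=> ??; rewrite -scalerAr.
- by rewrite mulr0.
- move=> k; case: hm => ->.
    by rewrite -exprS; exact: genM_pow.
  case: k => [|k]; first by rewrite expr0 mulr1; exact: t_gen.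
  by rewrite exprS mulrA ts mul1r; exact: genM_pow.
Qed.

Lemma gen_mulr m x : (m = s \/ m = t) -> genM s x -> genM s (x * m).
Proof.
move=> hm hx.
apply: (gen_lin (f := fun y => y * m)) hx => //.
- exact: subm_genM.
- by move=> ??; rewrite mulrDl.
- by move=> ??; rewrite -scalerAl.
- by rewrite mul0r.
- move=> k; case: hm => ->.
    by rewrite -exprSr; exact: genM_pow.
  case: k => [|k]; first by rewrite expr0 mul1r; exact: t_gen.
  by rewrite exprSr -mulrA st mulr1; exact: genM_pow.
Qed.

Lemma pw_gen k : genM s (p k).
Proof.
case: k => [n|n]; first exact: genM_pow.
rewrite /=; elim: n => [|n IH]; first by rewrite expr1; exact: t_gen.
by rewrite exprS; apply: gen_mull => //; right.
Qed.

Lemma exp3 (S : A -> Prop) (x y : A) : subm S ->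
  S (x * p 2 * y) -> S (x * p 1 * y) -> S (x * p 0 * y) -> S (x * p (-1) * y) -> S (x * p (-2) * y) ->
  S (x * p 3 * y) /\ S (x * p (-3) * y).
Proof.
move=> hS h2 h1 h0 hm1 hm2; split.
  rewrite e3 !mulrDr !mulrDl -!scalerAr -!scalerAl.
  by repeat apply: sD => //; apply: sZ.
rewrite (unscale (p (-3))) em3 -scalerAr -scalerAl; apply: sZ => //.
rewrite mulrBr mulrBl !mulrDr !mulrDl -!scalerAr -!scalerAl.
apply: sB => //.
by repeat apply: sD => //; apply: sZ.
Qed.

Lemma Wpow (S : A -> Prop) (x y : A) : subm S ->
  (forall m, -2 <= m <= 2 -> S (x * p m * y)) -> forall n, S (x * s ^+ n * y).
Proof.
move=> hS H n; elim: n y H => [|n IH] y H; first exact: (H 0).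
have -> : x * s ^+ n.+1 * y = x * s ^+ n * (s * y) by rewrite exprSr !mulrA.
apply: IH => m /int_window hm.
rewrite mulrA -(mulrA x) -(pwS ts).
case: hm => [->|[->|[->|[->|->]]]]; try by apply: H.
have [h _] := exp3 hS (H 2 isT) (H 1 isT) (H 0 isT) (H (-1) isT) (H (-2) isT).
exact: h.
Qed.

End Quint.

Section Clos.
Variables (R : comUnitRingType) (A : algType R).

Lemma mulM_closl (X Y : A -> Prop) m : (forall x, X x -> X (m * x)) ->
  forall z, mulM X Y z -> mulM X Y (m * z).
Proof.
move=> hX z hz; apply: (span_lin (f := fun x => m * x)) hz.
- exact: subm_span.
- by move=> ??; rewrite mulrDr.
- by move=> ??; rewrite -scalerAr.
- by rewrite mulr0.
- by move=> v [x [y [hx hy ->]]]; rewrite mulrA; apply: mulM_in => //; apply: hX.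
Qed.

Lemma mulM_closr (X Y : A -> Prop) m : (forall y, Y y -> Y (y * m)) ->
  forall z, mulM X Y z -> mulM X Y (z * m).
Proof.
move=> hY z hz; apply: (span_lin (f := fun x => x * m)) hz.
- exact: subm_span.
- by move=> ??; rewrite mulrDl.
- by move=> ??; rewrite -scalerAl.
- by rewrite mul0r.
- by move=> v [x [y [hx hy ->]]]; rewrite -mulrA; apply: mulM_in => //; apply: hY.
Qed.

Lemma mulM_eltr (X : A -> Prop) g m : g * m = m * g -> (forall x, X x -> X (x * m)) ->
  forall z, mulM X (eltM g) z -> mulM X (eltM g) (z * m).
Proof.
move=> hg hX z hz; apply: (span_lin (f := fun x => x * m)) hz.
- exact: subm_span.
- by move=> ??; rewrite mulrDl.
- by move=> ??; rewrite -scalerAl.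
- by rewrite mul0r.
- move=> v [x [y [hx hy ->]]]; rewrite hy -mulrA hg mulrA.
  by apply: mulM_in => //; apply: hX.
Qed.

End Clos.

Section Main.
Variables (R : comUnitRingType) (A : algType R) (a b c d e : R) (s1 s2 t1 t2 : A).
Hypotheses (eU : e \is a GRing.unit) (st1 : s1 * t1 = 1) (ts1 : t1 * s1 = 1)
  (st2 : s2 * t2 = 1) (ts2 : t2 * s2 = 1) (br : s1 * s2 * s1 = s2 * s1 * s2)
  (q1 : s1 ^+ 5 = a *: s1 ^+ 4 + b *: s1 ^+ 3 + c *: s1 ^+ 2 + d *: s1 + e%:A)
  (q2 : s2 ^+ 5 = a *: s2 ^+ 4 + b *: s2 ^+ 3 + c *: s2 ^+ 2 + d *: s2 + e%:A).

Let u1 := genM s1.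
Definition base := mulM (mulM u1 (genM s2)) u1.
Definition Cs : seq (A -> Prop) :=
  [:: mulM u1 (eltM (s2 * s1 ^+ 2 * s2));
      mulM u1 (eltM (t2 * t1 ^+ 2 * t2));
      sandM u1 (t2 * s1 ^+ 2 * t2);
      sandM u1 (s2 * t1 ^+ 2 * s2);
      sandM u1 (s2 ^+ 2 * s1 ^+ 2 * s2 ^+ 2);
      sandM u1 (t2 ^+ 2 * t1 ^+ 2 * t2 ^+ 2);
      sandM u1 (s2 * t1 ^+ 2 * s2 ^+ 2);
      sandM u1 (t2 * s1 ^+ 2 * t2 ^+ 2);
      sandM u1 (t2 * s1 * t2);
      sandM u1 (s2 * t1 * s2);
      sandM u1 (t2 ^+ 2 * t1 ^+ 2 * s2 ^+ 2);
      sandM u1 (s2 ^+ 2 * s1 ^+ 2 * t2 ^+ 2);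
      sandM u1 (s2 ^+ 2 * t1 ^+ 2 * s2 ^+ 2);
      sandM u1 (t2 ^+ 2 * s1 ^+ 2 * t2 ^+ 2);
      sandM u1 (t2 ^+ 2 * s1 * t2);
      sandM u1 (t2 * s1 * t2 ^+ 2)].
Definition W := foldr (@addM _ A) base Cs.

Lemma WE : Uprime s1 s2 t1 t2 = W. Proof. by []. Qed.

Lemma subm_Cs C : inP C Cs -> subm C.
Proof.
rewrite /Cs /=; do 16 (case=> [<-|]; first exact: subm_span); done.
Qed.

Lemma subm_W : subm W.
Proof. by apply: foldr_subm; [exact: subm_span | exact: subm_Cs]. Qed.

Lemma Cs0 C : inP C Cs -> C 0.
Proof. by move=> h; apply: s0; apply: subm_Cs. Qed.

Lemma W_in C x : (C = base \/ inP C Cs) -> C x -> W x.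
Proof. by apply: foldr_in; [exact: subm_span | exact: subm_Cs]. Qed.

Lemma gen1l m x : m = s1 \/ m = t1 -> u1 x -> u1 (m * x).
Proof. exact: (gen_mull eU st1 ts1 q1). Qed.
Lemma gen1r m x : m = s1 \/ m = t1 -> u1 x -> u1 (x * m).
Proof. exact: (gen_mulr eU st1 ts1 q1). Qed.

Lemma om_s1 : s2 * s1 ^+ 2 * s2 * s1 = s1 * (s2 * s1 ^+ 2 * s2).
Proof.
have := checkw_ok st1 ts1 st2 ts2 br (ss := [:: WNorm; WSplit 0%N 2; WRule 1%N 5%N true 2; WNorm; WSplit 2%N 1; WRule 0%N 0%N true 2; WNorm])
  (w1 := [:: (true, 1); (false, 2); (true, 1); (false, 1)]) (w2 := [:: (false, 1); (true, 1); (false, 2); (true, 1)]) isT.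
rewrite /evalw /lw /= ?expr1 !mulr1 !mulrA.
by [].
Qed.
Lemma om_t1 : s2 * s1 ^+ 2 * s2 * t1 = t1 * (s2 * s1 ^+ 2 * s2).
Proof.
have := checkw_ok st1 ts1 st2 ts2 br (ss := [:: WNorm; WSplit 2%N (-1); WRule 0%N 4%N true 2; WNorm; WSplit 1%N 1; WRule 2%N 1%N true 2; WNorm])
  (w1 := [:: (true, 1); (false, 2); (true, 1); (false, (-1))]) (w2 := [:: (false, (-1)); (true, 1); (false, 2); (true, 1)]) isT.
rewrite /evalw /lw /= ?expr1 !mulr1 !mulrA.
by [].
Qed.
Lemma omi_s1 : t2 * t1 ^+ 2 * t2 * s1 = s1 * (t2 * t1 ^+ 2 * t2).
Proof.
have := checkw_ok st1 ts1 st2 ts2 br (ss := [:: WNorm; WSplit 2%N 1; WRule 0%N 5%N true (-2); WNorm; WSplit 1%N (-1); WRule 2%N 3%N true (-2); WNorm])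
  (w1 := [:: (true, (-1)); (false, (-2)); (true, (-1)); (false, 1)]) (w2 := [:: (false, 1); (true, (-1)); (false, (-2)); (true, (-1))]) isT.
rewrite /evalw /lw /= ?expr1 !mulr1 !mulrA.
by [].
Qed.
Lemma omi_t1 : t2 * t1 ^+ 2 * t2 * t1 = t1 * (t2 * t1 ^+ 2 * t2).
Proof.
have := checkw_ok st1 ts1 st2 ts2 br (ss := [:: WNorm; WSplit 0%N (-2); WRule 1%N 4%N true (-2); WNorm; WSplit 2%N (-1); WRule 0%N 2%N true (-2); WNorm])
  (w1 := [:: (true, (-1)); (false, (-2)); (true, (-1)); (false, (-1))]) (w2 := [:: (false, (-1)); (true, (-1)); (false, (-2)); (true, (-1))]) isT.
rewrite /evalw /lw /= ?expr1 !mulr1 !mulrA.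
by [].
Qed.

Lemma W_l m x : m = s1 \/ m = t1 -> W x -> W (m * x).
Proof.
move=> hm; apply: (foldr_clos (f := fun z => m * z)).
- by move=> ??; rewrite mulrDr.
- by apply: mulM_closl; apply: mulM_closl => y; apply: gen1l.
- move=> C; rewrite /Cs /=; do 16 (case=> [<-|]; first by
    (apply: mulM_closl; apply: mulM_closl => y; apply: gen1l) ||
    (apply: mulM_closl => y; apply: gen1l)); done.
Qed.

Lemma W_r m x : m = s1 \/ m = t1 -> W x -> W (x * m).
Proof.
move=> hm; apply: (foldr_clos (f := fun z => z * m)).
- by move=> ??; rewrite mulrDl.
- by rewrite /base; apply: (@mulM_closr _ _ _ _ m) => y; apply: gen1r.
- have hg1 : s2 * s1 ^+ 2 * s2 * m = m * (s2 * s1 ^+ 2 * s2).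
    by case: hm => ->; [exact: om_s1 | exact: om_t1].
  have hg2 : t2 * t1 ^+ 2 * t2 * m = m * (t2 * t1 ^+ 2 * t2).
    by case: hm => ->; [exact: omi_s1 | exact: omi_t1].
  move=> C; rewrite /Cs /=; case=> [<-|]; first by apply: mulM_eltr => // y; apply: gen1r.
  case=> [<-|]; first by apply: mulM_eltr => // y; apply: gen1r.
  do 14 (case=> [<-|]; first by apply: mulM_closr => y; apply: gen1r); done.
Qed.

Definition Tm (p q r : int) := pw s2 t2 p * pw s1 t1 q * pw s2 t2 r.

Lemma W_pwl k x : W x -> W (pw s1 t1 k * x).
Proof.
move=> hx; case: k => [n|n] /=.
  elim: n => [|n IH]; first by rewrite expr0 mul1r.
  by rewrite exprS -mulrA; apply: W_l => //; left.
elim: n => [|n IH]; first by rewrite expr1; apply: W_l => //; right.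
by rewrite exprS -mulrA; apply: W_l => //; right.
Qed.

Lemma W_pwr k x : W x -> W (x * pw s1 t1 k).
Proof.
move=> hx; case: k => [n|n] /=.
  elim: n => [|n IH]; first by rewrite expr0 mulr1.
  by rewrite exprSr mulrA; apply: W_r => //; left.
elim: n => [|n IH]; first by rewrite expr1; apply: W_r => //; right.
by rewrite exprSr mulrA; apply: W_r => //; right.
Qed.

Lemma W_pw5 x p q r y : W (Tm p q r) -> W (pw s1 t1 x * Tm p q r * pw s1 t1 y).
Proof. by move=> h; apply: W_pwr; apply: W_pwl. Qed.

Lemma W_base k : W (pw s2 t2 k).
Proof.
apply: (W_in (C := base)); first by left.
have -> : pw s2 t2 k = s1 ^+ 0 * pw s2 t2 k * s1 ^+ 0 by rewrite expr0 mul1r mulr1.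
apply: mulM_in; last exact: genM_pow.
apply: mulM_in; first exact: genM_pow.
exact: (pw_gen eU st2 ts2 q2).
Qed.

Lemma W_sand g : inP (sandM u1 g) Cs -> W g.
Proof.
move=> h; apply: (W_in (C := sandM u1 g)); first by right.
suff : sandM u1 g (s1 ^+ 0 * g * s1 ^+ 0) by rewrite expr0 mul1r mulr1.
rewrite /sandM; apply: (@mulM_in _ _ (mulM u1 (eltM g)) u1); last exact: genM_pow.
by apply: (@mulM_in _ _ u1 (eltM g)); [exact: genM_pow | rewrite /eltM].
Qed.

Lemma W_elt g : inP (mulM u1 (eltM g)) Cs -> W g.
Proof.
move=> h; apply: (W_in (C := mulM u1 (eltM g))); first by right.
suff : mulM u1 (eltM g) (s1 ^+ 0 * g) by rewrite expr0 mul1r.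
by apply: mulM_in; [exact: genM_pow | rewrite /eltM].
Qed.

Lemma T0_l q r : W (Tm 0 q r).
Proof. by rewrite /Tm /= expr0 mul1r; apply: W_pwl; apply: W_base. Qed.

Lemma T0_r p q : W (Tm p q 0).
Proof. by rewrite /Tm /= expr0 mulr1; apply: W_pwr; apply: W_base. Qed.

Lemma T0_m p r : W (Tm p 0 r).
Proof. by rewrite /Tm /= expr0 mulr1 -(pwD st2 ts2); apply: W_base. Qed.

Lemma weqT p q r x p' q' r' y ss :
  checkw ss [:: (true, p); (false, q); (true, r)]
            [:: (false, x); (true, p'); (false, q'); (true, r'); (false, y)] ->
  Tm p q r = pw s1 t1 x * Tm p' q' r' * pw s1 t1 y.
Proof.
move=> h; have := checkw_ok st1 ts1 st2 ts2 br h.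
by rewrite /evalw /lw /= !mulr1 /Tm !mulrA.
Qed.

Lemma Tr3 p q : W (Tm p q 2) -> W (Tm p q 1) -> W (Tm p q 0) -> W (Tm p q (-1)) -> W (Tm p q (-2)) ->
  W (Tm p q 3) /\ W (Tm p q (-3)).
Proof.
have h := exp3 eU st2 ts2 q2 (x := pw s2 t2 p * pw s1 t1 q) (y := 1) subm_W.
rewrite /Tm => h2 h1 h0 hm1 hm2.
rewrite -[X in W X /\ _]mulr1 -[X in _ /\ W X]mulr1.
by apply: h; rewrite mulr1.
Qed.

Lemma Tl3 q r : W (Tm 2 q r) -> W (Tm 1 q r) -> W (Tm 0 q r) -> W (Tm (-1) q r) -> W (Tm (-2) q r) ->
  W (Tm 3 q r) /\ W (Tm (-3) q r).
Proof.
have h := exp3 eU st2 ts2 q2 (x := 1) (y := pw s1 t1 q * pw s2 t2 r) subm_W.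
have e' m : pw s2 t2 m * pw s1 t1 q * pw s2 t2 r = 1 * pw s2 t2 m * (pw s1 t1 q * pw s2 t2 r).
  by rewrite mul1r mulrA.
by rewrite /Tm !e'.
Qed.

Lemma Tm3 p r : W (Tm p 2 r) -> W (Tm p 1 r) -> W (Tm p 0 r) -> W (Tm p (-1) r) -> W (Tm p (-2) r) ->
  W (Tm p 3 r) /\ W (Tm p (-3) r).
Proof. exact: (exp3 eU st1 ts1 q1 (x := pw s2 t2 p) (y := pw s2 t2 r) subm_W). Qed.

Lemma T_m2_m2_m2 : W (Tm (-2) (-2) (-2)).
Proof. apply: W_sand; do 5 right; left; reflexivity. Qed.

Lemma T_m2_m2_2 : W (Tm (-2) (-2) 2).
Proof. apply: W_sand; do 10 right; left; reflexivity. Qed.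

Lemma T_m2_m1_m1 : W (Tm (-2) (-1) (-1)).
Proof.
rewrite (@weqT (-2) (-1) (-1) (-1) (-1) (-2) 0 0 [:: WNorm; WRule 0%N 2%N true (-2); WNorm] isT).
apply: W_pw5.
exact: (T0_r _ _).
Qed.

Lemma T_m2_1_m1 : W (Tm (-2) 1 (-1)).
Proof. apply: W_sand; do 14 right; left; reflexivity. Qed.

Lemma T_m2_1_1 : W (Tm (-2) 1 1).
Proof.
rewrite (@weqT (-2) 1 1 1 1 (-2) 0 0 [:: WNorm; WRule 0%N 0%N true (-2); WNorm] isT).
apply: W_pw5.
exact: (T0_r _ _).
Qed.

Lemma T_m2_2_m2 : W (Tm (-2) 2 (-2)).
Proof. apply: W_sand; do 13 right; left; reflexivity. Qed.

Lemma T_m1_m2_m1 : W (Tm (-1) (-2) (-1)).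
Proof. apply: W_elt; do 1 right; left; reflexivity. Qed.

Lemma T_m1_m2_1 : W (Tm (-1) (-2) 1).
Proof.
rewrite (@weqT (-1) (-2) 1 1 (-2) (-1) 0 0 [:: WNorm; WRule 0%N 5%N true (-2); WNorm] isT).
apply: W_pw5.
exact: (T0_r _ _).
Qed.

Lemma T_m1_m1_m2 : W (Tm (-1) (-1) (-2)).
Proof.
rewrite (@weqT (-1) (-1) (-2) (-2) (-1) (-1) 0 0 [:: WNorm; WRule 0%N 3%N true (-2); WNorm] isT).
apply: W_pw5.
exact: (T0_r _ _).
Qed.

Lemma T_m1_m1_m1 : W (Tm (-1) (-1) (-1)).
Proof.
rewrite (@weqT (-1) (-1) (-1) (-1) (-1) (-1) 0 0 [:: WNorm; WRule 0%N 2%N true (-1); WNorm] isT).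
apply: W_pw5.
exact: (T0_r _ _).
Qed.

Lemma T_m1_m1_1 : W (Tm (-1) (-1) 1).
Proof.
rewrite (@weqT (-1) (-1) 1 1 (-1) (-1) 0 0 [:: WNorm; WRule 0%N 3%N true 1; WNorm] isT).
apply: W_pw5.
exact: (T0_r _ _).
Qed.

Lemma T_m1_m1_2 : W (Tm (-1) (-1) 2).
Proof.
rewrite (@weqT (-1) (-1) 2 2 (-1) (-1) 0 0 [:: WNorm; WRule 0%N 3%N true 2; WNorm] isT).
apply: W_pw5.
exact: (T0_r _ _).
Qed.

Lemma T_m1_1_m2 : W (Tm (-1) 1 (-2)).
Proof. apply: W_sand; do 15 right; left; reflexivity. Qed.

Lemma T_m1_1_m1 : W (Tm (-1) 1 (-1)).
Proof. apply: W_sand; do 8 right; left; reflexivity. Qed.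

Lemma T_m1_1_1 : W (Tm (-1) 1 1).
Proof.
rewrite (@weqT (-1) 1 1 1 1 (-1) 0 0 [:: WNorm; WRule 0%N 0%N true (-1); WNorm] isT).
apply: W_pw5.
exact: (T0_r _ _).
Qed.

Lemma T_m1_2_m2 : W (Tm (-1) 2 (-2)).
Proof. apply: W_sand; do 7 right; left; reflexivity. Qed.

Lemma T_m1_2_m1 : W (Tm (-1) 2 (-1)).
Proof. apply: W_sand; do 2 right; left; reflexivity. Qed.

Lemma T_m1_2_1 : W (Tm (-1) 2 1).
Proof.
rewrite (@weqT (-1) 2 1 1 2 (-1) 0 0 [:: WNorm; WRule 0%N 5%N true 2; WNorm] isT).
apply: W_pw5.
exact: (T0_r _ _).
Qed.

Lemma T_1_m2_m2 : W (Tm 1 (-2) (-2)).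
Proof.
rewrite (@weqT 1 (-2) (-2) (-1) (-2) 1 (-1) 0 [:: WNorm; WSplit 2%N (-1); WRule 0%N 4%N true (-2); WNorm] isT).
apply: W_pw5.
exact: T_m2_1_m1.
Qed.

Lemma T_1_m2_m1 : W (Tm 1 (-2) (-1)).
Proof.
rewrite (@weqT 1 (-2) (-1) (-1) (-2) 1 0 0 [:: WNorm; WRule 0%N 4%N true (-2); WNorm] isT).
apply: W_pw5.
exact: (T0_r _ _).
Qed.

Lemma T_1_m2_1 : W (Tm 1 (-2) 1).
Proof. apply: W_sand; do 3 right; left; reflexivity. Qed.

Lemma T_1_m2_2 : W (Tm 1 (-2) 2).
Proof. apply: W_sand; do 6 right; left; reflexivity. Qed.

Lemma T_1_m1_m2 : W (Tm 1 (-1) (-2)).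
Proof.
rewrite (@weqT 1 (-1) (-2) (-1) (-1) 1 (-1) 0 [:: WNorm; WSplit 2%N (-1); WRule 0%N 2%N true 1; WNorm] isT).
apply: W_pw5.
exact: T_m1_1_m1.
Qed.

Lemma T_1_m1_m1 : W (Tm 1 (-1) (-1)).
Proof.
rewrite (@weqT 1 (-1) (-1) (-1) (-1) 1 0 0 [:: WNorm; WRule 0%N 2%N true 1; WNorm] isT).
apply: W_pw5.
exact: (T0_r _ _).
Qed.

Lemma T_1_m1_1 : W (Tm 1 (-1) 1).
Proof. apply: W_sand; do 9 right; left; reflexivity. Qed.

Lemma T_1_1_m2 : W (Tm 1 1 (-2)).
Proof.
rewrite (@weqT 1 1 (-2) (-2) 1 1 0 0 [:: WNorm; WRule 0%N 1%N true (-2); WNorm] isT).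
apply: W_pw5.
exact: (T0_r _ _).
Qed.

Lemma T_1_1_m1 : W (Tm 1 1 (-1)).
Proof.
rewrite (@weqT 1 1 (-1) (-1) 1 1 0 0 [:: WNorm; WRule 0%N 1%N true (-1); WNorm] isT).
apply: W_pw5.
exact: (T0_r _ _).
Qed.

Lemma T_1_1_1 : W (Tm 1 1 1).
Proof.
rewrite (@weqT 1 1 1 1 1 1 0 0 [:: WNorm; WRule 0%N 0%N true 1; WNorm] isT).
apply: W_pw5.
exact: (T0_r _ _).
Qed.

Lemma T_1_1_2 : W (Tm 1 1 2).
Proof.
rewrite (@weqT 1 1 2 2 1 1 0 0 [:: WNorm; WRule 0%N 1%N true 2; WNorm] isT).
apply: W_pw5.
exact: (T0_r _ _).
Qed.

Lemma T_1_2_m1 : W (Tm 1 2 (-1)).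
Proof.
rewrite (@weqT 1 2 (-1) (-1) 2 1 0 0 [:: WNorm; WRule 0%N 4%N true 2; WNorm] isT).
apply: W_pw5.
exact: (T0_r _ _).
Qed.

Lemma T_1_2_1 : W (Tm 1 2 1).
Proof. apply: W_elt; do 0 right; left; reflexivity. Qed.

Lemma T_1_2_2 : W (Tm 1 2 2).
Proof.
rewrite (@weqT 1 2 2 (-1) 1 3 1 1 [:: WNorm; WSplit 2%N (-1); WRule 0%N 4%N true 2; WNorm; WSplit 1%N 1; WRule 2%N 1%N true 3; WNorm] isT).
apply: W_pw5.
exact: (proj1 (Tm3 T_1_2_1 T_1_1_1 (T0_m _ _) T_1_m1_1 T_1_m2_1)).
Qed.

Lemma T_2_m2_m2 : W (Tm 2 (-2) (-2)).
Proof.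
rewrite (@weqT 2 (-2) (-2) (-1) (-2) (-2) 2 1 [:: WNorm; WSplit 0%N 1; WSplit 3%N (-1); WRule 1%N 4%N true (-2); WNorm; WSplit 2%N (-1); WRule 0%N 2%N true 1; WNorm; WSplit 1%N (-2); WSplit 4%N (-2); WRule 2%N 1%N true (-2); WNorm; WSplit 3%N 2; WRule 4%N 0%N true (-1); WNorm] isT).
apply: W_pw5.
exact: T_m2_m2_2.
Qed.

Lemma T_2_m2_m1 : W (Tm 2 (-2) (-1)).
Proof.
rewrite (@weqT 2 (-2) (-1) 0 1 (-1) (-2) 1 [:: WNorm; WSplit 0%N 1; WRule 1%N 4%N true (-2); WNorm] isT).
apply: W_pw5.
exact: T_1_m1_m2.
Qed.

Lemma T_2_m2_2 : W (Tm 2 (-2) 2).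
Proof. apply: W_sand; do 12 right; left; reflexivity. Qed.

Lemma T_2_m1_m2 : W (Tm 2 (-1) (-2)).
Proof.
rewrite (@weqT 2 (-1) (-2) (-1) (-1) 2 (-1) 0 [:: WNorm; WSplit 2%N (-1); WRule 0%N 2%N true 2; WNorm] isT).
apply: W_pw5.
exact: T_m1_2_m1.
Qed.

Lemma T_2_m1_m1 : W (Tm 2 (-1) (-1)).
Proof.
rewrite (@weqT 2 (-1) (-1) (-1) (-1) 2 0 0 [:: WNorm; WRule 0%N 2%N true 2; WNorm] isT).
apply: W_pw5.
exact: (T0_r _ _).
Qed.

Lemma T_2_1_m2 : W (Tm 2 1 (-2)).
Proof.
rewrite (@weqT 2 1 (-2) 0 1 (-2) 1 1 [:: WNorm; WSplit 0%N 1; WRule 1%N 1%N true (-2); WNorm] isT).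
apply: W_pw5.
exact: T_1_m2_1.
Qed.

Lemma T_2_1_m1 : W (Tm 2 1 (-1)).
Proof.
rewrite (@weqT 2 1 (-1) 0 1 (-1) 1 1 [:: WNorm; WSplit 0%N 1; WRule 1%N 1%N true (-1); WNorm] isT).
apply: W_pw5.
exact: T_1_m1_1.
Qed.

Lemma T_2_1_1 : W (Tm 2 1 1).
Proof.
rewrite (@weqT 2 1 1 1 1 2 0 0 [:: WNorm; WRule 0%N 0%N true 2; WNorm] isT).
apply: W_pw5.
exact: (T0_r _ _).
Qed.

Lemma T_2_1_2 : W (Tm 2 1 2).
Proof.
rewrite (@weqT 2 1 2 1 1 2 1 0 [:: WNorm; WSplit 2%N 1; WRule 0%N 0%N true 2; WNorm] isT).
apply: W_pw5.
exact: T_1_2_1.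
Qed.

Lemma T_2_2_m2 : W (Tm 2 2 (-2)).
Proof. apply: W_sand; do 11 right; left; reflexivity. Qed.

Lemma T_2_2_1 : W (Tm 2 2 1).
Proof.
rewrite (@weqT 2 2 1 1 1 3 1 (-1) [:: WNorm; WSplit 0%N 3; WRule 1%N 5%N true 2; WNorm; WSplit 2%N 1; WRule 0%N 0%N true 3; WNorm] isT).
apply: W_pw5.
exact: (proj1 (Tm3 T_1_2_1 T_1_1_1 (T0_m _ _) T_1_m1_1 T_1_m2_1)).
Qed.

Lemma T_2_2_2 : W (Tm 2 2 2).
Proof. apply: W_sand; do 4 right; left; reflexivity. Qed.

Lemma T_m2_m2_m1 : W (Tm (-2) (-2) (-1)).
Proof.
rewrite (@weqT (-2) (-2) (-1) (-1) (-1) (-3) (-1) 1 [:: WNorm; WSplit 0%N (-3); WRule 1%N 4%N true (-2); WNorm; WSplit 2%N (-1); WRule 0%N 2%N true (-3); WNorm] isT).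
apply: W_pw5.
exact: (proj2 (Tm3 T_m1_2_m1 T_m1_1_m1 (T0_m _ _) T_m1_m1_m1 T_m1_m2_m1)).
Qed.

Lemma T_m2_m2_1 : W (Tm (-2) (-2) 1).
Proof.
rewrite (@weqT (-2) (-2) 1 0 (-1) 1 (-2) (-1) [:: WNorm; WSplit 0%N (-1); WRule 1%N 5%N true (-2); WNorm] isT).
apply: W_pw5.
exact: T_m1_1_m2.
Qed.

Lemma T_m2_m1_m2 : W (Tm (-2) (-1) (-2)).
Proof.
rewrite (@weqT (-2) (-1) (-2) (-1) (-1) (-2) (-1) 0 [:: WNorm; WSplit 2%N (-1); WRule 0%N 2%N true (-2); WNorm] isT).
apply: W_pw5.
exact: T_m1_m2_m1.
Qed.

Lemma T_m2_m1_1 : W (Tm (-2) (-1) 1).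
Proof.
rewrite (@weqT (-2) (-1) 1 0 (-1) 1 (-1) (-1) [:: WNorm; WSplit 0%N (-1); WRule 1%N 3%N true 1; WNorm] isT).
apply: W_pw5.
exact: T_m1_1_m1.
Qed.

Lemma T_m2_m1_2 : W (Tm (-2) (-1) 2).
Proof.
rewrite (@weqT (-2) (-1) 2 0 (-1) 2 (-1) (-1) [:: WNorm; WSplit 0%N (-1); WRule 1%N 3%N true 2; WNorm] isT).
apply: W_pw5.
exact: T_m1_2_m1.
Qed.

Lemma T_m2_1_m2 : W (Tm (-2) 1 (-2)).
Proof.
rewrite (@weqT (-2) 1 (-2) 1 1 (-2) (-3) 0 [:: WNorm; WSplit 2%N 1; WRule 0%N 0%N true (-2); WNorm] isT).
apply: W_pw5.
exact: (proj2 (Tr3 T_1_m2_2 T_1_m2_1 (T0_r _ _) T_1_m2_m1 T_1_m2_m2)).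
Qed.

Lemma T_m2_1_2 : W (Tm (-2) 1 2).
Proof.
rewrite (@weqT (-2) 1 2 1 1 (-2) 1 0 [:: WNorm; WSplit 2%N 1; WRule 0%N 0%N true (-2); WNorm] isT).
apply: W_pw5.
exact: T_1_m2_1.
Qed.

Lemma T_m2_2_2 : W (Tm (-2) 2 2).
Proof.
rewrite (@weqT (-2) 2 2 1 2 2 (-2) (-1) [:: WNorm; WSplit 0%N (-1); WSplit 3%N 1; WRule 1%N 5%N true 2; WNorm; WSplit 2%N 1; WRule 0%N 0%N true (-1); WNorm; WSplit 1%N 2; WRule 2%N 3%N true 1; WNorm; WSplit 2%N 2; WRule 3%N 2%N false (-2); WNorm] isT).
apply: W_pw5.
exact: T_2_2_m2.
Qed.

Lemma T_m1_m2_m2 : W (Tm (-1) (-2) (-2)).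
Proof.
rewrite (@weqT (-1) (-2) (-2) 1 (-1) (-3) (-1) (-1) [:: WNorm; WSplit 2%N 1; WRule 0%N 5%N true (-2); WNorm; WSplit 1%N (-1); WRule 2%N 3%N true (-3); WNorm] isT).
apply: W_pw5.
exact: (proj2 (Tm3 T_m1_2_m1 T_m1_1_m1 (T0_m _ _) T_m1_m1_m1 T_m1_m2_m1)).
Qed.

Lemma T_m1_m2_2 : W (Tm (-1) (-2) 2).
Proof.
rewrite (@weqT (-1) (-2) 2 1 (-2) (-1) 1 0 [:: WNorm; WSplit 2%N 1; WRule 0%N 5%N true (-2); WNorm] isT).
apply: W_pw5.
exact: T_m2_m1_1.
Qed.

Lemma T_m1_1_2 : W (Tm (-1) 1 2).
Proof.
rewrite (@weqT (-1) 1 2 1 1 (-1) 1 0 [:: WNorm; WSplit 2%N 1; WRule 0%N 0%N true (-1); WNorm] isT).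
apply: W_pw5.
exact: T_1_m1_1.
Qed.

Lemma T_1_m1_2 : W (Tm 1 (-1) 2).
Proof.
rewrite (@weqT 1 (-1) 2 (-1) (-1) 1 3 0 [:: WNorm; WSplit 2%N (-1); WRule 0%N 2%N true 1; WNorm] isT).
apply: W_pw5.
exact: (proj1 (Tr3 T_m1_1_2 T_m1_1_1 (T0_r _ _) T_m1_1_m1 T_m1_1_m2)).
Qed.

Lemma T_1_2_m2 : W (Tm 1 2 (-2)).
Proof.
rewrite (@weqT 1 2 (-2) (-1) 2 1 (-1) 0 [:: WNorm; WSplit 2%N (-1); WRule 0%N 4%N true 2; WNorm] isT).
apply: W_pw5.
exact: T_2_1_m1.
Qed.

Lemma T_2_m2_1 : W (Tm 2 (-2) 1).
Proof.
rewrite (@weqT 2 (-2) 1 0 3 1 (-2) (-1) [:: WNorm; WSplit 0%N 3; WRule 1%N 5%N true (-2); WNorm] isT).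
apply: W_pw5.
exact: (proj1 (Tl3 T_2_1_m2 T_1_1_m2 (T0_l _ _) T_m1_1_m2 T_m2_1_m2)).
Qed.

Lemma T_2_m1_1 : W (Tm 2 (-1) 1).
Proof.
rewrite (@weqT 2 (-1) 1 0 3 1 (-1) (-1) [:: WNorm; WSplit 0%N 3; WRule 1%N 3%N true 1; WNorm] isT).
apply: W_pw5.
exact: (proj1 (Tl3 T_2_1_m1 T_1_1_m1 (T0_l _ _) T_m1_1_m1 T_m2_1_m1)).
Qed.

Lemma T_2_2_m1 : W (Tm 2 2 (-1)).
Proof.
rewrite (@weqT 2 2 (-1) 0 1 (-1) 2 1 [:: WNorm; WSplit 0%N 1; WRule 1%N 4%N true 2; WNorm] isT).
apply: W_pw5.
exact: T_1_m1_2.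
Qed.

Lemma T_m2_2_1 : W (Tm (-2) 2 1).
Proof.
rewrite (@weqT (-2) 2 1 0 (-1) 1 2 (-1) [:: WNorm; WSplit 0%N (-1); WRule 1%N 5%N true 2; WNorm] isT).
apply: W_pw5.
exact: T_m1_1_2.
Qed.

Lemma T_m1_2_2 : W (Tm (-1) 2 2).
Proof.
rewrite (@weqT (-1) 2 2 1 2 (-1) 1 0 [:: WNorm; WSplit 2%N 1; WRule 0%N 5%N true 2; WNorm] isT).
apply: W_pw5.
exact: T_2_m1_1.
Qed.

Lemma T_2_m1_2 : W (Tm 2 (-1) 2).
Proof.
rewrite (@weqT 2 (-1) 2 (-1) (-1) 2 3 0 [:: WNorm; WSplit 2%N (-1); WRule 0%N 2%N true 2; WNorm] isT).
apply: W_pw5.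
exact: (proj1 (Tr3 T_m1_2_2 T_m1_2_1 (T0_r _ _) T_m1_2_m1 T_m1_2_m2)).
Qed.

Lemma T_m2_2_m1 : W (Tm (-2) 2 (-1)).
Proof.
rewrite (@weqT (-2) 2 (-1) 0 (-3) (-1) 2 1 [:: WNorm; WSplit 0%N (-3); WRule 1%N 4%N true 2; WNorm] isT).
apply: W_pw5.
exact: (proj2 (Tl3 T_2_m1_2 T_1_m1_2 (T0_l _ _) T_m1_m1_2 T_m2_m1_2)).
Qed.

Lemma Wall p q r : -2 <= p <= 2 -> -2 <= q <= 2 -> -2 <= r <= 2 -> W (Tm p q r).
Proof.
move=> /int_window hp /int_window hq /int_window hr.
case: hp => [->|[->|[->|[->|->]]]]; case: hq => [->|[->|[->|[->|->]]]];
  case: hr => [->|[->|[->|[->|->]]]].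
1: exact: T_m2_m2_m2.
1: exact: T_m2_m2_m1.
1: exact: T0_r.
1: exact: T_m2_m2_1.
1: exact: T_m2_m2_2.
1: exact: T_m2_m1_m2.
1: exact: T_m2_m1_m1.
1: exact: T0_r.
1: exact: T_m2_m1_1.
1: exact: T_m2_m1_2.
1: exact: T0_m.
1: exact: T0_m.
1: exact: T0_m.
1: exact: T0_m.
1: exact: T0_m.
1: exact: T_m2_1_m2.
1: exact: T_m2_1_m1.
1: exact: T0_r.
1: exact: T_m2_1_1.
1: exact: T_m2_1_2.
1: exact: T_m2_2_m2.
1: exact: T_m2_2_m1.
1: exact: T0_r.
1: exact: T_m2_2_1.
1: exact: T_m2_2_2.
1: exact: T_m1_m2_m2.
1: exact: T_m1_m2_m1.
1: exact: T0_r.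
1: exact: T_m1_m2_1.
1: exact: T_m1_m2_2.
1: exact: T_m1_m1_m2.
1: exact: T_m1_m1_m1.
1: exact: T0_r.
1: exact: T_m1_m1_1.
1: exact: T_m1_m1_2.
1: exact: T0_m.
1: exact: T0_m.
1: exact: T0_m.
1: exact: T0_m.
1: exact: T0_m.
1: exact: T_m1_1_m2.
1: exact: T_m1_1_m1.
1: exact: T0_r.
1: exact: T_m1_1_1.
1: exact: T_m1_1_2.
1: exact: T_m1_2_m2.
1: exact: T_m1_2_m1.
1: exact: T0_r.
1: exact: T_m1_2_1.
1: exact: T_m1_2_2.
1: exact: T0_l.
1: exact: T0_l.
1: exact: T0_l.
1: exact: T0_l.
1: exact: T0_l.
1: exact: T0_l.
1: exact: T0_l.
1: exact: T0_l.
1: exact: T0_l.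
1: exact: T0_l.
1: exact: T0_m.
1: exact: T0_m.
1: exact: T0_m.
1: exact: T0_m.
1: exact: T0_m.
1: exact: T0_l.
1: exact: T0_l.
1: exact: T0_l.
1: exact: T0_l.
1: exact: T0_l.
1: exact: T0_l.
1: exact: T0_l.
1: exact: T0_l.
1: exact: T0_l.
1: exact: T0_l.
1: exact: T_1_m2_m2.
1: exact: T_1_m2_m1.
1: exact: T0_r.
1: exact: T_1_m2_1.
1: exact: T_1_m2_2.
1: exact: T_1_m1_m2.
1: exact: T_1_m1_m1.
1: exact: T0_r.
1: exact: T_1_m1_1.
1: exact: T_1_m1_2.
1: exact: T0_m.
1: exact: T0_m.
1: exact: T0_m.
1: exact: T0_m.
1: exact: T0_m.
1: exact: T_1_1_m2.
1: exact: T_1_1_m1.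
1: exact: T0_r.
1: exact: T_1_1_1.
1: exact: T_1_1_2.
1: exact: T_1_2_m2.
1: exact: T_1_2_m1.
1: exact: T0_r.
1: exact: T_1_2_1.
1: exact: T_1_2_2.
1: exact: T_2_m2_m2.
1: exact: T_2_m2_m1.
1: exact: T0_r.
1: exact: T_2_m2_1.
1: exact: T_2_m2_2.
1: exact: T_2_m1_m2.
1: exact: T_2_m1_m1.
1: exact: T0_r.
1: exact: T_2_m1_1.
1: exact: T_2_m1_2.
1: exact: T0_m.
1: exact: T0_m.
1: exact: T0_m.
1: exact: T0_m.
1: exact: T0_m.
1: exact: T_2_1_m2.
1: exact: T_2_1_m1.
1: exact: T0_r.
1: exact: T_2_1_1.
1: exact: T_2_1_2.
1: exact: T_2_2_m2.
1: exact: T_2_2_m1.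
1: exact: T0_r.
1: exact: T_2_2_1.
1: exact: T_2_2_2.
Qed.

Lemma W_nat i j k : W (s2 ^+ i * s1 ^+ j * s2 ^+ k).
Proof.
have -> : s2 ^+ i * s1 ^+ j * s2 ^+ k = 1 * s2 ^+ i * (s1 ^+ j * s2 ^+ k) by rewrite mul1r mulrA.
apply: (Wpow eU st2 ts2 q2 subm_W) => p hp.
rewrite mul1r mulrA.
apply: (Wpow eU st1 ts1 q1 subm_W) => q hq.
rewrite -[X in W X]mulr1.
apply: (Wpow eU st2 ts2 q2 subm_W) => r hr.
rewrite mulr1; exact: Wall.
Qed.

Lemma W_main z : mulM (mulM (genM s2) (genM s1)) (genM s2) z -> W z.
Proof.
apply: span_in; first exact: subm_W.
move=> v [x [y [hx hy ->]]].
apply: (span_lin (f := fun x => x * y)) hx; first exact: subm_W.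
- by move=> ??; rewrite mulrDl.
- by move=> ??; rewrite -scalerAl.
- by rewrite mul0r.
move=> v' [p [q [hp hq ->]]].
apply: (gen_lin (f := fun p => p * q * y)) hp; first exact: subm_W.
- by move=> ??; rewrite !mulrDl.
- by move=> ??; rewrite -!scalerAl.
- by rewrite !mul0r.
move=> i.
apply: (gen_lin (f := fun q => s2 ^+ i * q * y)) hq; first exact: subm_W.
- by move=> ??; rewrite mulrDr mulrDl.
- by move=> ??; rewrite -scalerAr -scalerAl.
- by rewrite mulr0 mul0r.
move=> j.
apply: (gen_lin (f := fun y => s2 ^+ i * s1 ^+ j * y)) hy; first exact: subm_W.
- by move=> ??; rewrite mulrDr.
- by move=> ??; rewrite -scalerAr.
- by rewrite mulr0.
exact: W_nat.
Qed.

End Main.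

Theorem proposition4p2 (R : comUnitRingType) (A : algType R)
    (a b c d e : R) (s1 s2 t1 t2 : A) :
  e \is a GRing.unit ->
  s1 * t1 = 1 -> t1 * s1 = 1 -> s2 * t2 = 1 -> t2 * s2 = 1 ->
  s1 * s2 * s1 = s2 * s1 * s2 ->
  s1 ^+ 5 = a *: s1 ^+ 4 + b *: s1 ^+ 3 + c *: s1 ^+ 2 + d *: s1 + e%:A ->
  s2 ^+ 5 = a *: s2 ^+ 4 + b *: s2 ^+ 3 + c *: s2 ^+ 2 + d *: s2 + e%:A ->
  subM (mulM (mulM (genM s2) (genM s1)) (genM s2)) (Uprime s1 s2 t1 t2).
Proof.
move=> eU st1 ts1 st2 ts2 br q1 q2 z hz.
exact: (W_main eU st1 ts1 st2 ts2 br q1 q2 hz).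
Qed.
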